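(* For every set of formulas $\Gamma$ and every formula $\varphi$: $\Gamma\vdash_{\mathsf{B}^{\Box}}\varphi$ if and only if $\Gamma\models^{l}_{\mathsf{B}^{\Box}}\varphi$.
   Context: Formulas are built from a countably infinite set of propositional variables and the constants $0,1$ using the unary connectives $\neg$, $J_2$, $\Box$ and the binary connective $\vee$. Abbreviations: $\varphi\wedge\psi:=\neg(\neg\varphi\vee\neg\psi)$, $\varphi\to\psi:=\neg\varphi\vee\psi$, $\varphi\leftrightarrow\psi:=(\varphi\to\psi)\wedge(\psi\to\varphi)$, $J_0\varphi:=J_2\neg\varphi$, $J_1\varphi:=\neg(J_2\varphi\vee J_2\neg\varphi)$, $+\varphi:=\neg J_1\varphi$, $\varphi\equiv\psi:=(J_2\varphi\leftrightarrow J_2\psi)\wedge(J_0\varphi\leftrightarrow J_0\psi)$. Syntax: $\vdash_{\mathsf{B}^{\Box}}$ is given by the Hilbert calculus whose axioms are all instances of: $\varphi\vee\varphi\equiv\varphi$; $\varphi\vee\psi\equiv\psi\vee\varphi$; $(\varphi\vee\psi)\vee\chi\equiv\varphi\vee(\psi\vee\chi)$; $\varphi\vee0\equiv\varphi$; $\neg\neg\varphi\equiv\varphi$; $\neg(\varphi\vee\psi)\equiv\neg\varphi\wedge\neg\psi$; $\neg1\equiv0$; $\varphi\wedge(\psi\vee\chi)\equiv(\varphi\wedge\psi)\vee(\varphi\wedge\chi)$; $J_0J_2\varphi\leftrightarrow\neg J_2\varphi$; $J_2\varphi\leftrightarrow\neg(J_0\varphi\vee J_1\varphi)$; $(J_2\varphi\vee\neg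 J_2\varphi)\leftrightarrow1$; $J_2(\varphi\vee\psi)\leftrightarrow(J_2\varphi\wedge J_2\psi)\vee(J_2\varphi\wedge J_0\psi)\vee(J_0\varphi\wedge J_2\psi)$; $\Box(J_2\varphi\to J_2\psi)\to(\Box J_2\varphi\to\Box J_2\psi)$; $+\varphi\leftrightarrow+\Box\varphi$; $J_2\Box\varphi\to\Box J_2\varphi$; $J_0\Box\varphi\to\neg\Box J_0\neg\varphi$; rules: from $J_2\varphi\leftrightarrow J_2\psi$ and $J_0\varphi\leftrightarrow J_0\psi$ infer $\varphi\equiv\psi$; from $\varphi$ infer $J_2\varphi\leftrightarrow1$; from $J_2\varphi\leftrightarrow1$ infer $\varphi$; necessitation: if $\vdash\varphi$ then $\vdash\Box\varphi$ (only for theorems). Semantics: let $\mathbf{WK}^e$ be the algebra on $\{0,\tfrac12,1\}$ with $\neg0=1$, $\neg1=0$, $\neg\tfrac12=\tfrac12$; $a\vee b=\tfrac12$ if $a=\tfrac12$ or $b=\tfrac12$, otherwise $a\vee b=\max(a,b)$; $J_2(1)=1$, $J_2(\tfrac12)=J_2(0)=0$. A Bochvar-Kripke model is a triple $(W,R,v)$ with $W\neq\emptyset$, $R\subseteq W\times W$, $v:W\times\mathrm{Fm}\to\{0,\tfrac12,1\}$ such that for each $w$, $v(w,\cdot)$ commutes with $\neg,\vee,J_2,0,1$ as computed in $\mathbf{WK}^e$, and: $v(w,\Box\varphi)=\tfrac12$ iff $v(w,\varphi)=\tfrac12$; $v(w,\Box\varphi)=1$ iff $v(w,\varphi)\neq\tfrac12$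 and $v(s,\varphi)=1$ for all $s$ with $wRs$; $v(w,\Box\varphi)=0$ iff $v(w,\varphi)\neq\tfrac12$ and $v(s,\varphi)\neq1$ for some $s$ with $wRs$. Local consequence: $\Gamma\models^l_{\mathsf{B}^{\Box}}\varphi$ iff for every Bochvar-Kripke model $(W,R,v)$ and every $w\in W$, if $v(w,\gamma)=1$ for all $\gamma\in\Gamma$ then $v(w,\varphi)=1$.
   Formalization: The calculus $\vdash_{\mathsf{B}^{\Box}}$ also has modus ponens and, as axioms, all classical tautologies in ¬, ∨, 0, 1 whose atoms are formulas $J_2\psi$ or $\Box\chi$ with χ built from 0, 1 and such formulas by ¬, ∨, □. The paper assumes this as well. *)

(* Defs.v *)
From Stdlib Require Import Bool.

Inductive form : Type :=
| Var : nat -> form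
| Bot : form
| Top : form
| Neg : form -> form
| J2  : form -> form
| Box : form -> form
| Or  : form -> form -> form.

Definition And (a b : form) : form := Neg (Or (Neg a) (Neg b)).
Definition Imp (a b : form) : form := Or (Neg a) b.
Definition Iff (a b : form) : form := And (Imp a b) (Imp b a).
Definition J0 (a : form) : form := J2 (Neg a).
Definition J1 (a : form) : form := Neg (Or (J2 a) (J2 (Neg a))).
Definition Plus (a : form) : form := Neg (J1 a).
Definition Equiv (a b : form) : form :=
  And (Iff (J2 a) (J2 b)) (Iff (J0 a) (J0 b)).

Fixpoint ext (a : form) : bool :=
  match a with
  | Var _ => false
  | Bot | Top | J2 _ => true
  | Neg b | Box b => ext b
  | Or b c => ext b && ext c
  end.

Fixpoint ceval (f : form -> bool) (a : form) : bool :=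
  match a with
  | Bot => false
  | Top => true
  | Neg b => negb (ceval f b)
  | Or b c => ceval f b || ceval f c
  | _ => f a
  end.

(* Instances of classical tautologies whose atoms are external formulas. *)
Definition ext_taut (a : form) : Prop :=
  ext a = true /\ forall f : form -> bool, ceval f a = true.

Inductive axiom : form -> Prop :=
| ax_idem a       : axiom (Equiv (Or a a) a)
| ax_comm a b     : axiom (Equiv (Or a b) (Or b a))
| ax_assoc a b c  : axiom (Equiv (Or (Or a b) c) (Or a (Or b c)))
| ax_zero a       : axiom (Equiv (Or a Bot) a)
| ax_dneg a       : axiom (Equiv (Neg (Neg a)) a)
| ax_demorgan a b : axiom (Equiv (Neg (Or a b)) (And (Neg a) (Neg b)))
| ax_neg1         : axiom (Equiv (Neg Top) Bot)
| ax_distr a b c  : axiom (Equiv (And a (Or b c)) (Or (And a b) (And a c)))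
| ax_J0J2 a       : axiom (Iff (J0 (J2 a)) (Neg (J2 a)))
| ax_J2 a         : axiom (Iff (J2 a) (Neg (Or (J0 a) (J1 a))))
| ax_lem a        : axiom (Iff (Or (J2 a) (Neg (J2 a))) Top)
| ax_J2or a b     : axiom (Iff (J2 (Or a b))
                             (Or (Or (And (J2 a) (J2 b)) (And (J2 a) (J0 b)))
                                 (And (J0 a) (J2 b))))
| ax_K a b        : axiom (Imp (Box (Imp (J2 a) (J2 b)))
                               (Imp (Box (J2 a)) (Box (J2 b))))
| ax_plusbox a    : axiom (Iff (Plus a) (Plus (Box a)))
| ax_J2box a      : axiom (Imp (J2 (Box a)) (Box (J2 a)))
| ax_J0box a      : axiom (Imp (J0 (Box a)) (Neg (Box (J0 (Neg a)))))
| ax_taut a       : ext_taut a -> axiom a.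

Inductive derivable : (form -> Prop) -> form -> Prop :=
| d_hyp (G : form -> Prop) a : G a -> derivable G a
| d_ax G a : axiom a -> derivable G a
| d_mp G a b : derivable G a -> derivable G (Imp a b) -> derivable G b
| d_equiv G a b :
    derivable G (Iff (J2 a) (J2 b)) -> derivable G (Iff (J0 a) (J0 b)) ->
    derivable G (Equiv a b)
| d_J2intro G a : derivable G a -> derivable G (Iff (J2 a) Top)
| d_J2elim G a : derivable G (Iff (J2 a) Top) -> derivable G a
| d_nec G a : derivable (fun _ => False) a -> derivable G (Box a).

Inductive wk : Type := W0 | Wh | W1.

Definition wneg (x : wk) : wk :=
  match x with W0 => W1 | Wh => Wh | W1 => W0 end.
Definition wor (x y : wk) : wk :=
  match x, y with
  | Wh, _ | _, Wh => Wh
  | W1, _ | _, W1 => W1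
  | W0, W0 => W0
  end.
Definition wJ2 (x : wk) : wk := match x with W1 => W1 | _ => W0 end.

Record BKmodel : Type := {
  W : Type;
  W_nonempty : inhabited W;
  R : W -> W -> Prop;
  v : W -> form -> wk;
  v_bot : forall w, v w Bot = W0;
  v_top : forall w, v w Top = W1;
  v_neg : forall w a, v w (Neg a) = wneg (v w a);
  v_or  : forall w a b, v w (Or a b) = wor (v w a) (v w b);
  v_J2  : forall w a, v w (J2 a) = wJ2 (v w a);
  v_box_h : forall w a, v w (Box a) = Wh <-> v w a = Wh;
  v_box_1 : forall w a, v w (Box a) = W1 <->
              (v w a <> Wh /\ forall s, R w s -> v s a = W1);
  v_box_0 : forall w a, v w (Box a) = W0 <->
              (v w a <> Wh /\ exists s, R w s /\ v s a <> W1)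
}.

Definition local_conseq (G : form -> Prop) (a : form) : Prop :=
  forall (M : BKmodel) (w : W M),
    (forall g, G g -> v M w g = W1) -> v M w a = W1.

(* Main.v *)
Require Import Defs.
From Stdlib Require Import List Bool Setoid Classical ClassicalEpsilon Arith Lia Cantor.
Import ListNotations.

Section Sound.
Variable M : BKmodel.

Ltac vsimp := cbv beta delta [And Imp Iff J0 J1 Plus Equiv] in *;
  repeat (rewrite ?v_neg, ?v_or, ?v_J2, ?v_top, ?v_bot in *).

Definition isW1 (x : wk) : bool := match x with W1 => true | _ => false end.

Lemma ext_eval : forall a w, ext a = true ->
  v M w a = if ceval (fun x => isW1 (v M w x)) a then W1 else W0.
Proof.
  induction a; intros w He; simpl in *; try discriminate.
  - apply v_bot.
  - apply v_top.
  - rewrite v_neg, IHa by exact He. destruct (ceval _ a); reflexivity.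
  - rewrite v_J2. destruct (v M w a); reflexivity.
  - assert (Hn : v M w (Box a) <> Wh).
    { intro H. apply (proj1 (v_box_h M _ _)) in H. rewrite IHa in H by exact He.
      destruct (ceval _ a); discriminate. }
    destruct (v M w (Box a)); [reflexivity | congruence | reflexivity].
  - apply andb_prop in He as [H1 H2].
    rewrite v_or, IHa1, IHa2 by assumption.
    destruct (ceval _ a1), (ceval _ a2); reflexivity.
Qed.

Lemma J2_nh : forall w a, v M w (J2 a) <> Wh.
Proof. intros. rewrite v_J2. destruct (v M w a); discriminate. Qed.

Lemma box_nh : forall w a, v M w a <> Wh -> v M w (Box a) = W0 \/ v M w (Box a) = W1.
Proof.
  intros w a H. destruct (v M w (Box a)) eqn:E; auto.
  apply (proj1 (v_box_h M _ _)) in E. contradiction.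
Qed.

Lemma v_imp : forall w x y, v M w (Imp x y) = wor (wneg (v M w x)) (v M w y).
Proof. intros. unfold Imp. rewrite v_or, v_neg. reflexivity. Qed.

Ltac vcases := repeat match goal with |- context [v M ?w ?x] =>
   match x with Box _ => fail 1 | _ => destruct (v M w x) end end.

Lemma axiom_valid : forall a, axiom a -> forall w, v M w a = W1.
Proof.
  intros a Ha w. destruct Ha; try (vsimp; vcases; reflexivity).
  -
    assert (HX := box_nh w (Imp (J2 a) (J2 b)) ltac:(vsimp; vcases; discriminate)).
    assert (HY := box_nh w (J2 a) (J2_nh w a)).
    assert (HZ := box_nh w (J2 b) (J2_nh w b)).
    rewrite (v_imp w (Box (Imp (J2 a) (J2 b)))), (v_imp w (Box (J2 a))).
    destruct HZ as [HZ|HZ]; rewrite HZ;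
      [| destruct HX as [HX|HX]; rewrite HX; destruct HY as [HY|HY]; rewrite HY; reflexivity].
    destruct HX as [HX|HX]; rewrite HX; [destruct HY as [HY|HY]; rewrite HY; reflexivity|].
    destruct HY as [HY|HY]; rewrite HY; [reflexivity|].
    exfalso. apply (proj1 (v_box_0 M _ _)) in HZ as [_ [s [Rs Hs]]].
    apply (proj1 (v_box_1 M _ _)) in HX as [_ HX]. apply (proj1 (v_box_1 M _ _)) in HY as [_ HY].
    specialize (HX s Rs). specialize (HY s Rs). apply Hs.
    revert HX HY. vsimp. destruct (v M s a), (v M s b); simpl; congruence.
  -
    vsimp. destruct (v M w a) eqn:E.
    + assert (H := box_nh w a ltac:(congruence)). destruct H as [H|H]; rewrite H; reflexivity.
    + assert (H : v M w (Box a) = Wh) by (apply (proj2 (v_box_h M _ _)); exact E). rewrite H. reflexivity.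
    + assert (H := box_nh w a ltac:(congruence)). destruct H as [H|H]; rewrite H; reflexivity.
  -
    assert (HZ := box_nh w (J2 a) (J2_nh w a)).
    cbv beta delta [Imp]. rewrite v_or, v_neg, v_J2.
    destruct (v M w (Box a)) eqn:E.
    + destruct HZ as [HZ|HZ]; rewrite HZ; reflexivity.
    + destruct HZ as [HZ|HZ]; rewrite HZ; reflexivity.
    + apply (proj1 (v_box_1 M _ _)) in E as [E1 E2].
      assert (H : v M w (Box (J2 a)) = W1).
      { apply (proj2 (v_box_1 M _ _)). split. apply J2_nh. intros s Rs. rewrite v_J2, (E2 s Rs). reflexivity. }
      rewrite H. reflexivity.
  -
    assert (HZ := box_nh w (J0 (Neg a)) (J2_nh w _)).
    cbv beta delta [Imp J0]. rewrite v_or, v_neg, v_J2, v_neg, (v_neg M w (Box _)).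
    destruct (v M w (Box a)) eqn:E.
    + apply (proj1 (v_box_0 M _ _)) in E as [E1 [s [Rs Hs]]].
      assert (H : v M w (Box (J2 (Neg (Neg a)))) = W0).
      { apply (proj2 (v_box_0 M _ _)). split. apply J2_nh. exists s. split; [exact Rs|].
        rewrite v_J2, !v_neg. destruct (v M s a); simpl; congruence. }
      rewrite H. reflexivity.
    + unfold J0 in HZ. destruct HZ as [HZ|HZ]; rewrite HZ; reflexivity.
    + unfold J0 in HZ. destruct HZ as [HZ|HZ]; rewrite HZ; reflexivity.
  -
    destruct H as [He Hc]. rewrite ext_eval by exact He. rewrite Hc. reflexivity.
Qed.



End Sound.

Lemma soundness : forall G a, derivable G a -> local_conseq G a.
Proof.
  intros G a H. induction H; intros M w HG.
  - apply HG; assumption.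
  - apply axiom_valid; assumption.
  - specialize (IHderivable1 M w HG). specialize (IHderivable2 M w HG).
    rewrite v_imp in IHderivable2. rewrite IHderivable1 in IHderivable2.
    destruct (v M w b); simpl in *; congruence.
  - specialize (IHderivable1 M w HG). specialize (IHderivable2 M w HG).
    revert IHderivable1 IHderivable2. cbv beta delta [And Imp Iff J0 J1 Plus Equiv].
    repeat (rewrite v_neg || rewrite v_or || rewrite v_J2 || rewrite v_top).
    destruct (v M w a), (v M w b); simpl; congruence.
  - specialize (IHderivable M w HG). unfold Iff, And, Imp.
    repeat (rewrite v_neg || rewrite v_or || rewrite v_J2 || rewrite v_top).
    rewrite IHderivable. reflexivity.
  - specialize (IHderivable M w HG). revert IHderivable. unfold Iff, And, Imp.
    repeat (rewrite v_neg || rewrite v_or || rewrite v_J2 || rewrite v_top).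
    destruct (v M w a); simpl; congruence.
  - apply (proj2 (v_box_1 M _ _)). split.
    + rewrite (IHderivable M w (fun g (f : False) => match f with end)). discriminate.
    + intros s _. apply (IHderivable M s (fun g (f : False) => match f with end)).
Qed.

Ltac taut_solve :=
  split;
  [ cbv beta delta [And Imp Iff J0 J1 Plus Equiv] in *; simpl;
    repeat (match goal with H : ext ?x = true |- _ => rewrite H end);
    reflexivity
  | let f := fresh "f" in intro f;
    cbv beta delta [And Imp Iff J0 J1 Plus Equiv]; simpl;
    repeat match goal with
      | |- context [f ?x] => destruct (f x)
      | |- context [ceval f ?x] => destruct (ceval f x)
      end; reflexivity ].

Definition Th a := derivable (fun _ => False) a.

Fixpoint imps (l : list form) (e : form) : form :=
  match l with [] => e | x :: l' => Imp x (imps l' e) end.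

Lemma mono : forall S a, derivable S a -> forall S', (forall y, S y -> S' y) -> derivable S' a.
Proof.
  intros S a H. induction H; intros S' HS.
  - apply d_hyp; auto.
  - apply d_ax; auto.
  - eapply d_mp; eauto.
  - apply d_equiv; auto.
  - apply d_J2intro; auto.
  - apply d_J2elim; auto.
  - apply d_nec; auto.
Qed.

Lemma th_lift : forall S a, Th a -> derivable S a.
Proof. intros S a H. eapply mono; [exact H| intros y []]. Qed.

Lemma imps_mp : forall S l e, derivable S (imps l e) -> Forall (derivable S) l -> derivable S e.
Proof.
  intros S l; induction l as [|x l IH]; intros e H HF; simpl in *; auto.
  inversion HF; subst. apply IH; auto. eapply d_mp; eauto.
Qed.

Lemma tmp : forall S l e, ext_taut (imps l e) -> Forall (derivable S) l -> derivable S e.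
Proof. intros. eapply imps_mp; eauto. apply d_ax, ax_taut; auto. Qed.

Ltac fall := repeat apply Forall_cons; try apply Forall_nil.
Ltac by_taut l := apply (tmp _ l); [taut_solve | fall].

Lemma J2i : forall S a, derivable S a -> derivable S (J2 a).
Proof. intros. by_taut [Iff (J2 a) Top]. apply d_J2intro; auto. Qed.

Lemma J2e : forall S a, derivable S (J2 a) -> derivable S a.
Proof. intros. apply d_J2elim. by_taut [J2 a]. auto. Qed.

Lemma F_dneg : forall S a, derivable S (Iff (J2 (Neg (Neg a))) (J2 a)).
Proof. intros. by_taut [Equiv (Neg (Neg a)) a]. apply d_ax, ax_dneg. Qed.

Lemma F_excl : forall S a, derivable S (Neg (And (J2 a) (J0 a))).
Proof. intros. by_taut [Iff (J2 a) (Neg (Or (J0 a) (J1 a)))]. apply d_ax, ax_J2. Qed.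

Lemma F_top : forall S, derivable S (J2 Top).
Proof. intros. apply J2i. apply d_ax, ax_taut. taut_solve. Qed.

Lemma F_bot : forall S, derivable S (Neg (J2 Bot)).
Proof.
  intros. by_taut [Equiv (Neg Top) Bot; Neg (And (J2 Top) (J0 Top)); J2 Top].
  apply d_ax, ax_neg1. apply F_excl. apply F_top.
Qed.

Lemma F_plus : forall S e, ext e = true -> derivable S (Or (J2 e) (J0 e)).
Proof.
  intros S e He.
  assert (H1 : derivable S (J2 (Or e (Neg e)))).
  { apply J2i. apply d_ax, ax_taut. taut_solve. }
  by_taut [J2 (Or e (Neg e));
    Iff (J2 (Or e (Neg e)))
        (Or (Or (And (J2 e) (J2 (Neg e))) (And (J2 e) (J0 (Neg e))))
            (And (J0 e) (J2 (Neg e))))].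
  exact H1. apply d_ax, ax_J2or.
Qed.

Lemma F_J2J2 : forall S a, derivable S (Iff (J2 (J2 a)) (J2 a)).
Proof.
  intros. by_taut [Or (J2 (J2 a)) (J0 (J2 a)); Iff (J0 (J2 a)) (Neg (J2 a));
                   Neg (And (J2 (J2 a)) (J0 (J2 a)))].
  apply F_plus; reflexivity. apply d_ax, ax_J0J2. apply F_excl.
Qed.

Lemma F_ext1 : forall S e, ext e = true -> derivable S (Imp (J2 e) e).
Proof.
  intros S e He. apply J2e.
  by_taut [Iff (J2 (Imp (J2 e) e))
        (Or (Or (And (J2 (Neg (J2 e))) (J2 e)) (And (J2 (Neg (J2 e))) (J0 e)))
            (And (J0 (Neg (J2 e))) (J2 e)));
    Iff (J0 (J2 e)) (Neg (J2 e));
    Iff (J2 (Neg (Neg (J2 e)))) (J2 (J2 e));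
    Iff (J2 (J2 e)) (J2 e);
    Or (J2 e) (J0 e);
    Neg (And (J2 e) (J0 e))].
  - apply d_ax, ax_J2or.
  - apply d_ax, ax_J0J2.
  - apply F_dneg.
  - apply F_J2J2.
  - apply F_plus; auto.
  - apply F_excl.
Qed.

Lemma F_ext2 : forall S e, ext e = true -> derivable S (Imp e (J2 e)).
Proof.
  intros S e He. apply J2e.
  by_taut [Iff (J2 (Imp e (J2 e)))
        (Or (Or (And (J2 (Neg e)) (J2 (J2 e))) (And (J2 (Neg e)) (J0 (J2 e))))
            (And (J0 (Neg e)) (J2 (J2 e))));
    Iff (J0 (J2 e)) (Neg (J2 e));
    Iff (J2 (Neg (Neg e))) (J2 e);
    Iff (J2 (J2 e)) (J2 e);
    Or (J2 e) (J0 e);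
    Neg (And (J2 e) (J0 e))].
  - apply d_ax, ax_J2or.
  - apply d_ax, ax_J0J2.
  - apply F_dneg.
  - apply F_J2J2.
  - apply F_plus; auto.
  - apply F_excl.
Qed.

Lemma F_mpJ2 : forall S a b, derivable S (Imp (J2 a) (Imp (J2 (Imp a b)) (J2 b))).
Proof.
  intros. by_taut [Iff (J2 (Imp a b))
        (Or (Or (And (J2 (Neg a)) (J2 b)) (And (J2 (Neg a)) (J0 b)))
            (And (J0 (Neg a)) (J2 b)));
     Neg (And (J2 a) (J0 a))].
  apply d_ax, ax_J2or. apply F_excl.
Qed.

Lemma F_boxcong : forall S p q, Th (Imp (J2 p) (J2 q)) -> derivable S (Imp (Box (J2 p)) (Box (J2 q))).
Proof.
  intros. eapply d_mp. apply d_nec. exact H. apply d_ax, ax_K.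
Qed.

Lemma DT : forall S' b, derivable S' b -> forall S e, (forall y, S' y -> S y \/ y = e) ->
  ext e = true -> derivable S (Imp e (J2 b)).
Proof.
  intros S' b H. induction H; intros S e HS He.
  - destruct (HS a H) as [H1| ->].
    + by_taut [J2 a]. apply J2i, d_hyp; auto.
    + apply F_ext2; auto.
  - by_taut [J2 a]. apply J2i, d_ax; auto.
  - specialize (IHderivable1 S e HS He). specialize (IHderivable2 S e HS He).
    by_taut [Imp e (J2 a); Imp e (J2 (Imp a b)); Imp (J2 a) (Imp (J2 (Imp a b)) (J2 b))];
      auto. apply F_mpJ2.
  - specialize (IHderivable1 S e HS He). specialize (IHderivable2 S e HS He).
    by_taut [Imp e (J2 (Iff (J2 a) (J2 b))); Imp e (J2 (Iff (J0 a) (J0 b)));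
             Imp (J2 (Iff (J2 a) (J2 b))) (Iff (J2 a) (J2 b));
             Imp (J2 (Iff (J0 a) (J0 b))) (Iff (J0 a) (J0 b));
             Imp (Equiv a b) (J2 (Equiv a b))]; auto;
      try apply F_ext1; try apply F_ext2; reflexivity.
  - specialize (IHderivable S e HS He).
    by_taut [Imp e (J2 a); Imp (Iff (J2 a) Top) (J2 (Iff (J2 a) Top))]; auto.
    apply F_ext2; reflexivity.
  - specialize (IHderivable S e HS He).
    by_taut [Imp e (J2 (Iff (J2 a) Top)); Imp (J2 (Iff (J2 a) Top)) (Iff (J2 a) Top)]; auto.
    apply F_ext1; reflexivity.
  - by_taut [J2 (Box a)]. apply J2i, d_nec; auto.
Qed.

Lemma compact : forall S b, derivable S b ->
  exists l, (forall y, In y l -> S y) /\ derivable (fun y => In y l) b.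
Proof.
  intros S b H. induction H.
  - exists [a]. split. intros y [<-|[]]; auto. apply d_hyp. left; auto.
  - exists []. split. intros y []. apply d_ax; auto.
  - destruct IHderivable1 as [l1 [H1 D1]]. destruct IHderivable2 as [l2 [H2 D2]].
    exists (l1 ++ l2). split.
    + intros y Hy. apply in_app_or in Hy as [Hy|Hy]; auto.
    + apply d_mp with a; [eapply mono; [exact D1|] | eapply mono; [exact D2|]];
      intros; apply in_or_app; auto.
  - destruct IHderivable1 as [l1 [H1 D1]]. destruct IHderivable2 as [l2 [H2 D2]].
    exists (l1 ++ l2). split.
    + intros y Hy. apply in_app_or in Hy as [Hy|Hy]; auto.
    + apply d_equiv; [eapply mono; [exact D1|] | eapply mono; [exact D2|]];
      intros; apply in_or_app; auto.
  - destruct IHderivable as [l [H1 D1]]. exists l. split; auto. apply d_J2intro; auto.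
  - destruct IHderivable as [l [H1 D1]]. exists l. split; auto. apply d_J2elim; auto.
  - exists []. split. intros y []. apply d_nec; auto.
Qed.

Lemma ext_imps : forall l e, Forall (fun y => ext y = true) l -> ext e = true ->
  ext (imps l e) = true.
Proof.
  induction l as [|x l IH]; intros e HF He; simpl; auto.
  inversion HF; subst. rewrite H1, IH; auto.
Qed.

Lemma imps_cong : forall l X Y, Forall (fun y => ext y = true) l -> ext X = true -> ext Y = true ->
  Th (Imp X Y) -> Th (Imp (imps l X) (imps l Y)).
Proof.
  induction l as [|x l IH]; intros X Y HF HX HY H; simpl; auto.
  inversion HF; subst.
  assert (E1 := ext_imps l X H3 HX). assert (E2 := ext_imps l Y H3 HY).
  specialize (IH X Y H3 HX HY H).
  by_taut [Imp (imps l X) (imps l Y)]. auto.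
Qed.

Lemma imps_swap : forall l e Z, Forall (fun y => ext y = true) l -> ext e = true -> ext Z = true ->
  Th (Imp (imps l (Imp e Z)) (Imp e (imps l Z))).
Proof.
  induction l as [|x l IH]; intros e Z HF He HZ; simpl.
  - by_taut (@nil form).
  - inversion HF; subst.
    assert (E1 := ext_imps l (Imp e Z) H2 ltac:(simpl; rewrite He, HZ; reflexivity)).
    assert (E2 := ext_imps l Z H2 HZ).
    specialize (IH e Z H2 He HZ).
    by_taut [Imp (imps l (Imp e Z)) (Imp e (imps l Z))]. auto.
Qed.

Lemma DTlist : forall l b, Forall (fun y => ext y = true) l ->
  derivable (fun y => In y l) b -> Th (imps l (J2 b)).
Proof.
  induction l as [|e l IH]; intros b HF H; simpl.
  - apply J2i. exact H.
  - inversion HF; subst.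
    assert (H' : derivable (fun y => In y l) (Imp e (J2 b))).
    { eapply DT. exact H. intros y [<-|Hy]; auto. auto. }
    specialize (IH _ H3 H').
    assert (E : ext (Imp e (J2 b)) = true) by (simpl; rewrite H2; reflexivity).
    eapply d_mp; [| apply imps_swap; auto].
    eapply d_mp; [exact IH|].
    apply imps_cong; [exact H3 | reflexivity | exact E | apply F_ext1; exact E].
Qed.

Definition world (G : form -> Prop) :=
  (forall a, derivable G a -> G a) /\ ~ G Bot /\ (forall a, G (J2 a) \/ G (Neg (J2 a))).

Definition consistent S := ~ derivable S Bot.

Lemma cons_sub : forall A B, (forall y, A y -> B y) -> consistent B -> consistent A.
Proof. intros A B H HB HA. apply HB. eapply mono; eauto. Qed.

Lemma cons_split : forall T0 p, consistent T0 ->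
  consistent (fun z => T0 z \/ z = J2 p) \/ consistent (fun z => T0 z \/ z = Neg (J2 p)).
Proof.
  intros T0 p H. apply NNPP. intro Hn. apply not_or_and in Hn as [H1 H2].
  apply NNPP in H1. apply NNPP in H2. apply H.
  apply DT with (S := T0) (e := J2 p) in H1; [| intros y Hy; exact Hy | reflexivity].
  apply DT with (S := T0) (e := Neg (J2 p)) in H2; [| intros y Hy; exact Hy | reflexivity].
  by_taut [Imp (J2 p) (J2 Bot); Imp (Neg (J2 p)) (J2 Bot); Neg (J2 Bot)]; auto.
  apply F_bot.
Qed.

Fixpoint enc (a : form) : nat :=
  match a with
  | Var n => to_nat (0, n)
  | Bot => to_nat (1, 0)
  | Top => to_nat (2, 0)
  | Neg b => to_nat (3, enc b)
  | J2 b => to_nat (4, enc b)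
  | Box b => to_nat (5, enc b)
  | Or b c => to_nat (6, to_nat (enc b, enc c))
  end.

Lemma to_nat_inj : forall p q, to_nat p = to_nat q -> p = q.
Proof. intros p q H. rewrite <- (cancel_of_to p), <- (cancel_of_to q), H. reflexivity. Qed.

Lemma enc_inj : forall a b, enc a = enc b -> a = b.
Proof.
  induction a; destruct b; intro H; cbn [enc] in H; apply to_nat_inj in H; try discriminate;
    pose proof (f_equal snd H) as H2; cbn [snd] in H2; try reflexivity.
  - subst; reflexivity.
  - f_equal; auto.
  - f_equal; auto.
  - f_equal; auto.
  - apply to_nat_inj in H2. pose proof (f_equal fst H2). pose proof (f_equal snd H2).
    cbn [fst snd] in *. f_equal; auto.
Qed.

Fixpoint chain (T0 : form -> Prop) (n : nat) : form -> Prop :=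
  match n with
  | 0 => T0
  | Datatypes.S m => fun y => chain T0 m y \/ exists p, enc p = m /\
      ((consistent (fun z => chain T0 m z \/ z = J2 p) /\ y = J2 p) \/
       (~ consistent (fun z => chain T0 m z \/ z = J2 p) /\ y = Neg (J2 p)))
  end.

Lemma chain_mono : forall T0 m n, m <= n -> forall y, chain T0 m y -> chain T0 n y.
Proof.
  intros T0 m n Hle. induction Hle; intros y H; auto. simpl. left; auto.
Qed.

Lemma chain_cons : forall T0 n, consistent T0 -> consistent (chain T0 n).
Proof.
  intros T0 n H0. induction n as [|m IH]; simpl; auto.
  destruct (classic (exists p, enc p = m)) as [[p Hp]|Hn].
  - destruct (classic (consistent (fun z => chain T0 m z \/ z = J2 p))) as [Hc|Hc].
    + eapply cons_sub; [|exact Hc]. intros y [Hy|[q [Hq [[_ ->]|[Hq2 ->]]]]]; auto.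
      * rewrite <- Hp in Hq. apply enc_inj in Hq. subst. auto.
      * rewrite <- Hp in Hq. apply enc_inj in Hq. subst. contradiction.
    + destruct (cons_split _ p IH) as [Hc'|Hc']; [contradiction|].
      eapply cons_sub; [|exact Hc']. intros y [Hy|[q [Hq [[Hq2 ->]|[_ ->]]]]]; auto.
      * rewrite <- Hp in Hq. apply enc_inj in Hq. subst. contradiction.
      * rewrite <- Hp in Hq. apply enc_inj in Hq. subst. auto.
  - eapply cons_sub; [|exact IH]. intros y [Hy|[q [Hq _]]]; auto. exfalso; eauto.
Qed.

Lemma cut_gen : forall S b, derivable S b -> forall D, (forall a, S a -> derivable D a) -> derivable D b.
Proof.
  intros S b H. induction H; intros D HD.
  - apply HD; auto.
  - apply d_ax; auto.
  - eapply d_mp; eauto.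
  - apply d_equiv; auto.
  - apply d_J2intro; auto.
  - apply d_J2elim; auto.
  - apply d_nec; auto.
Qed.

Lemma cut : forall D b, derivable (fun a => derivable D a) b -> derivable D b.
Proof. intros. eapply cut_gen; eauto. Qed.

Lemma lindenbaum : forall T0, consistent T0 -> exists G, world G /\ (forall y, T0 y -> G y).
Proof.
  intros T0 H0.
  set (D := fun y => exists n, chain T0 n y).
  assert (HD : consistent D).
  { intro HB. apply compact in HB as [l [Hl Hd]].
    assert (HN : exists N, forall y, In y l -> chain T0 N y).
    { clear Hd. induction l as [|x l IHl].
      - exists 0. intros y [].
      - destruct IHl as [N HN]. intros y Hy; apply Hl; right; auto.
        destruct (Hl x (or_introl eq_refl)) as [k Hk].
        exists (max N k). intros y [<-|Hy].
        + eapply chain_mono; [|exact Hk]. lia.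
        + eapply chain_mono; [|apply HN; exact Hy]. lia. }
    destruct HN as [N HN]. apply (chain_cons T0 N H0). eapply mono; eauto. }
  exists (fun a => derivable D a). split; [split; [|split]|].
  - intros a Ha. apply cut; auto.
  - exact HD.
  - intro a. destruct (classic (consistent (fun z => chain T0 (enc a) z \/ z = J2 a))) as [Hc|Hc].
    + left. apply d_hyp. exists (Datatypes.S (enc a)). simpl. right. exists a. auto.
    + right. apply d_hyp. exists (Datatypes.S (enc a)). simpl. right. exists a. auto.
  - intros y Hy. apply d_hyp. exists 0. exact Hy.
Qed.

Section World.
Variable G : form -> Prop.
Hypothesis HW : world G.

Lemma W_der : forall a, derivable G a -> G a.
Proof. apply HW. Qed.
Lemma W_th : forall a, Th a -> G a.
Proof. intros. apply W_der, th_lift; auto. Qed.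
Lemma W_bot : ~ G Bot.
Proof. apply HW. Qed.
Lemma W_compl : forall a, G (J2 a) \/ G (Neg (J2 a)).
Proof. apply HW. Qed.
Lemma W_taut : forall l e, ext_taut (imps l e) -> Forall G l -> G e.
Proof.
  intros l e H HF. apply W_der. apply (tmp _ l); auto.
  eapply Forall_impl; [|exact HF]. intros; apply d_hyp; auto.
Qed.
Ltac wtaut l := apply (W_taut l); [taut_solve | fall].

Lemma W_J2 : forall a, G a <-> G (J2 a).
Proof.
  intro a; split; intro H; apply W_der.
  - apply J2i, d_hyp; auto.
  - apply J2e, d_hyp; auto.
Qed.

Lemma W_ext_compl : forall x, ext x = true -> G x \/ G (Neg x).
Proof.
  intros x He. destruct (W_compl x) as [H|H].
  - left. apply W_J2; auto.
  - right. apply W_J2. wtaut [Or (J2 x) (J0 x); Neg (J2 x)]; auto.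
    apply W_der, F_plus; auto.
Qed.

Lemma W_not : forall x, ext x = true -> (G (Neg x) <-> ~ G x).
Proof.
  intros x He; split.
  - intros H1 H2. apply W_bot. wtaut [Neg x; x]; auto.
  - intro H. destruct (W_ext_compl x He); tauto.
Qed.

Lemma W_or : forall x y, ext x = true -> ext y = true -> (G (Or x y) <-> G x \/ G y).
Proof.
  intros x y Hx Hy; split.
  - intro H. destruct (W_ext_compl x Hx) as [H1|H1]; auto.
    right. wtaut [Or x y; Neg x]; auto.
  - intros [H|H]; [wtaut [x] | wtaut [y]]; auto.
Qed.

Lemma W_and : forall x y, ext x = true -> ext y = true -> (G (And x y) <-> G x /\ G y).
Proof.
  intros x y Hx Hy. unfold And.
  rewrite W_not, W_or, W_not, W_not by (simpl; rewrite ?Hx, ?Hy; reflexivity). tauto.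
Qed.

Lemma W_imp : forall x y, ext x = true -> ext y = true -> (G (Imp x y) <-> (G x -> G y)).
Proof.
  intros x y Hx Hy. unfold Imp.
  rewrite W_or, W_not by (simpl; rewrite ?Hx, ?Hy; reflexivity).
  destruct (W_ext_compl x Hx) as [H|H]; [| rewrite W_not in H by auto]; tauto.
Qed.

Lemma W_iff : forall x y, ext x = true -> ext y = true -> (G (Iff x y) <-> (G x <-> G y)).
Proof.
  intros x y Hx Hy. unfold Iff.
  rewrite W_and, W_imp, W_imp by (simpl; rewrite ?Hx, ?Hy; reflexivity). tauto.
Qed.

Lemma W_plus : forall a, G (Plus a) <-> G (J2 a) \/ G (J0 a).
Proof.
  intros a. unfold Plus, J1. rewrite W_not, W_not, W_or by reflexivity.
  destruct (W_compl a) as [H|H]; [| rewrite W_not in H by reflexivity];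
  unfold J0; tauto.
Qed.

Lemma W_equiv : forall a b, G (Equiv a b) <-> ((G (J2 a) <-> G (J2 b)) /\ (G (J0 a) <-> G (J0 b))).
Proof.
  intros a b. unfold Equiv. rewrite W_and, W_iff, W_iff by reflexivity. tauto.
Qed.
End World.

Section WF.
Variable G : form -> Prop.
Hypothesis HW : world G.

Definition P a := G (J2 a) \/ G (J0 a).

Lemma W_mp : forall a b, G a -> G (Imp a b) -> G b.
Proof. intros a b H1 H2. apply (W_der G HW). apply d_mp with a; apply d_hyp; auto. Qed.

Lemma WF_excl : forall a, G (J2 a) -> G (J0 a) -> False.
Proof.
  intros a. pose proof (W_th G HW _ (F_excl _ a)) as H.
  rewrite (W_not G HW), (W_and G HW) in H by reflexivity. tauto.
Qed.

Lemma WF_J0neg : forall a, G (J0 (Neg a)) <-> G (J2 a).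
Proof.
  intros a. pose proof (W_th G HW _ (d_ax _ _ (ax_dneg a))) as H.
  rewrite (W_equiv G HW) in H. unfold J0 in *. tauto.
Qed.

Lemma WF_J0J2 : forall a, G (J0 (J2 a)) <-> ~ G (J2 a).
Proof.
  intros a. pose proof (W_th G HW _ (d_ax _ _ (ax_J0J2 a))) as H.
  rewrite (W_iff G HW), (W_not G HW) in H by reflexivity. exact H.
Qed.

Lemma WF_J2J2 : forall a, G (J2 (J2 a)) <-> G (J2 a).
Proof. intros a. symmetry. apply (W_J2 G HW). Qed.

Lemma WF_or : forall a b, G (J2 (Or a b)) <->
  (G (J2 a) /\ G (J2 b)) \/ (G (J2 a) /\ G (J0 b)) \/ (G (J0 a) /\ G (J2 b)).
Proof.
  intros a b. pose proof (W_th G HW _ (d_ax _ _ (ax_J2or a b))) as H.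
  rewrite (W_iff G HW), !(W_or G HW), !(W_and G HW) in H by reflexivity. tauto.
Qed.

Lemma WF_top : G (J2 Top).
Proof. apply (W_th G HW), F_top. Qed.

Lemma WF_J0top : ~ G (J0 Top).
Proof. intro H. apply (WF_excl Top); auto. apply WF_top. Qed.

Lemma WF_J2bot : ~ G (J2 Bot).
Proof. pose proof (W_th G HW _ (F_bot _)) as H. rewrite (W_not G HW) in H by reflexivity. exact H. Qed.

Lemma WF_J0bot : G (J0 Bot).
Proof.
  pose proof (W_th G HW _ (d_ax _ _ ax_neg1)) as H. rewrite (W_equiv G HW) in H.
  apply H. apply WF_J0neg. apply WF_top.
Qed.

Lemma WF_orTop : forall x, G (J2 (Or x Top)) <-> P x.
Proof.
  intros x. rewrite WF_or. pose proof WF_top. pose proof WF_J0top. unfold P. tauto.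
Qed.

Lemma WF_PorTop : forall b, P (Or b Top) <-> P b.
Proof.
  intros b.
  pose proof (W_th G HW _ (d_ax _ _ (ax_assoc b Top Top))) as H2.
  rewrite (W_equiv G HW) in H2. destruct H2 as [H2 _].
  rewrite WF_orTop in H2. rewrite H2. rewrite WF_or.
  pose proof (proj2 (WF_orTop Top) (or_introl WF_top)) as HT.
  unfold P. tauto.
Qed.

Lemma WF_Por : forall a b, P (Or a b) <-> P a /\ P b.
Proof.
  intros a b.
  pose proof (W_th G HW _ (d_ax _ _ (ax_assoc a b Top))) as H1.
  rewrite (W_equiv G HW) in H1. destruct H1 as [H1 _].
  rewrite WF_orTop in H1. rewrite H1. rewrite WF_or. rewrite WF_orTop.
  pose proof (WF_PorTop b) as H3. unfold P in *. tauto.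
Qed.

Lemma WF_J0or : forall a b, G (J0 (Or a b)) <-> G (J0 a) /\ G (J0 b).
Proof.
  intros a b. pose proof (WF_Por a b) as H. unfold P in H.
  pose proof (WF_or a b). pose proof (WF_excl a). pose proof (WF_excl b).
  pose proof (WF_excl (Or a b)). tauto.
Qed.

Lemma WF_Pbox : forall a, P (Box a) <-> P a.
Proof.
  intros a. pose proof (W_th G HW _ (d_ax _ _ (ax_plusbox a))) as H.
  rewrite (W_iff G HW), !(W_plus G HW) in H by reflexivity. unfold P. tauto.
Qed.

Lemma WF_J2box : forall a, G (J2 (Box a)) <-> P a /\ G (Box (J2 a)).
Proof.
  intros a.
  pose proof (W_th G HW _ (d_ax _ _ (ax_J2box a))) as H1.
  pose proof (W_th G HW _ (d_ax _ _ (ax_J0box a))) as H2.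
  assert (H3 : G (Imp (Box (J2 a)) (Box (J2 (Neg (Neg a)))))).
  { apply (W_der G HW). apply F_boxcong. by_taut [Iff (J2 (Neg (Neg a))) (J2 a)]. apply F_dneg. }
  rewrite (W_imp G HW) in H1, H3 by reflexivity.
  rewrite (W_imp G HW), (W_not G HW) in H2 by reflexivity.
  pose proof (WF_Pbox a). pose proof (WF_excl (Box a)). unfold P, J0 in *. tauto.
Qed.

Lemma WF_Pext : forall e, ext e = true -> P e.
Proof.
  intros e He. pose proof (W_th G HW _ (F_plus _ e He)) as H.
  rewrite (W_or G HW) in H by reflexivity. exact H.
Qed.

Lemma WF_boxext : forall e, ext e = true -> (G (Box e) <-> G (Box (J2 e))).
Proof.
  intros e He. rewrite (W_J2 G HW (Box e)), WF_J2box. pose proof (WF_Pext e He). tauto.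
Qed.

Lemma BoxChain : forall l d, Forall (fun y => ext y = true /\ G (Box y)) l -> ext d = true ->
  G (Box (imps l d)) -> G (Box d).
Proof.
  induction l as [|y l IH]; intros d HF Hd H; simpl in *; auto.
  inversion HF as [|? ? [Hy HBy] HF']; subst.
  set (c := imps l d).
  assert (Hc : ext c = true).
  { apply ext_imps; auto. eapply Forall_impl; [|exact HF']. intros ? []; auto. }
  apply IH; auto. fold c in H |- *.
  apply (WF_boxext c Hc).
  apply (WF_boxext (Imp y c)) in H; [| simpl; rewrite Hy, Hc; reflexivity].
  assert (H2 : G (Box (J2 (Imp (J2 y) (J2 c))))).
  { eapply W_mp; [exact H|]. apply (W_der G HW). apply F_boxcong.
    by_taut [Imp (J2 (Imp y c)) (Imp y c); Imp y (J2 y); Imp (J2 y) y; Imp c (J2 c);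
             Imp (J2 c) c; Imp (Imp (J2 y) (J2 c)) (J2 (Imp (J2 y) (J2 c)))];
    first [apply F_ext1 | apply F_ext2]; simpl; rewrite ?Hy, ?Hc; reflexivity. }
  apply WF_boxext in H2; [|reflexivity].
  apply (WF_boxext y Hy) in HBy.
  eapply W_mp; [exact HBy|]. eapply W_mp; [exact H2|]. apply (W_th G HW). apply d_ax, ax_K.
Qed.

Lemma existence : forall a, ~ G (Box (J2 a)) ->
  exists D, world D /\ (forall x, G (Box (J2 x)) -> D (J2 x)) /\ ~ D (J2 a).
Proof.
  intros a Hn.
  set (T := fun y => exists x, y = J2 x /\ G (Box (J2 x))).
  assert (Hc : consistent (fun z => T z \/ z = Neg (J2 a))).
  { intro HB. apply DT with (S := T) (e := Neg (J2 a)) in HB;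
      [| intros y Hy; exact Hy | reflexivity].
    assert (HJ : derivable T (J2 a)).
    { by_taut [Imp (Neg (J2 a)) (J2 Bot); Neg (J2 Bot)]; auto. apply F_bot. }
    apply compact in HJ as [l [Hl Hd]].
    assert (HF : Forall (fun y => ext y = true /\ G (Box y)) l).
    { apply Forall_forall. intros y Hy. destruct (Hl y Hy) as [x [-> Hx]]. split; auto. }
    apply DTlist in Hd; [| eapply Forall_impl; [|exact HF]; intros ? []; auto].
    assert (HB2 : G (Box (imps l (J2 (J2 a))))) by (apply (W_der G HW), d_nec, Hd).
    apply BoxChain in HB2; auto.
    apply Hn. eapply W_mp; [exact HB2|]. apply (W_der G HW). apply F_boxcong.
    by_taut [Iff (J2 (J2 a)) (J2 a)]. apply F_J2J2. }
  destruct (lindenbaum _ Hc) as [D [HD Hsub]].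
  exists D. split; [exact HD|]. split.
  - intros x Hx. apply Hsub. left. exists x. auto.
  - intro H. apply (W_bot D HD). apply (W_der D HD).
    by_taut [J2 a; Neg (J2 a)]; apply d_hyp; auto.
Qed.

End WF.

Definition CW := {G : form -> Prop | world G}.
Definition CR (x y : CW) : Prop := forall a, proj1_sig x (Box (J2 a)) -> proj1_sig y (J2 a).
Definition Cv (x : CW) (a : form) : wk :=
  if excluded_middle_informative (proj1_sig x (J2 a)) then W1
  else if excluded_middle_informative (proj1_sig x (J0 a)) then W0 else Wh.

Lemma Cv_1 : forall x a, proj1_sig x (J2 a) -> Cv x a = W1.
Proof. intros x a H. unfold Cv. destruct (excluded_middle_informative _); tauto. Qed.

Lemma Cv_0 : forall x a, proj1_sig x (J0 a) -> Cv x a = W0.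
Proof.
  intros [G HW] a H. simpl in *. unfold Cv. simpl.
  destruct (excluded_middle_informative _) as [H2|H2].
  - exfalso. eapply WF_excl; eauto.
  - destruct (excluded_middle_informative _); tauto.
Qed.

Lemma Cv_h : forall x a, ~ proj1_sig x (J2 a) -> ~ proj1_sig x (J0 a) -> Cv x a = Wh.
Proof.
  intros x a H1 H2. unfold Cv.
  destruct (excluded_middle_informative _); [tauto|].
  destruct (excluded_middle_informative _); tauto.
Qed.

Lemma Cv_spec : forall x a,
  (proj1_sig x (J2 a) /\ Cv x a = W1) \/
  (~ proj1_sig x (J2 a) /\ proj1_sig x (J0 a) /\ Cv x a = W0) \/
  (~ proj1_sig x (J2 a) /\ ~ proj1_sig x (J0 a) /\ Cv x a = Wh).
Proof.
  intros x a.
  destruct (classic (proj1_sig x (J2 a))) as [H1|H1].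
  - left. split; auto. apply Cv_1; auto.
  - destruct (classic (proj1_sig x (J0 a))) as [H2|H2].
    + right; left. split; auto. split; auto. apply Cv_0; auto.
    + right; right. split; auto. split; auto. apply Cv_h; auto.
Qed.

Lemma Cv_W1 : forall x a, Cv x a = W1 <-> proj1_sig x (J2 a).
Proof.
  intros x a. destruct (Cv_spec x a) as [[H E]|[[H1 [H2 E]]|[H1 [H2 E]]]]; rewrite E;
  split; intro; try discriminate; tauto.
Qed.

Lemma Cv_Wh : forall x a, Cv x a = Wh <-> ~ P (proj1_sig x) a.
Proof.
  intros x a. unfold P. destruct (Cv_spec x a) as [[H E]|[[H1 [H2 E]]|[H1 [H2 E]]]]; rewrite E;
  split; intro; try discriminate; tauto.
Qed.

Lemma Cv_W0 : forall x a, Cv x a = W0 <-> proj1_sig x (J0 a).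
Proof.
  intros x a. destruct (Cv_spec x a) as [[H E]|[[H1 [H2 E]]|[H1 [H2 E]]]]; rewrite E;
  split; intro; try discriminate; try tauto.
  all: destruct x as [G HW]; simpl in *; exfalso; apply (WF_excl G HW a); assumption.
Qed.

Section Canon.
Variable x0 : CW.

Lemma c_bot : forall w, Cv w Bot = W0.
Proof. intros [G HW]. apply Cv_0. simpl. apply WF_J0bot; auto. Qed.

Lemma c_top : forall w, Cv w Top = W1.
Proof. intros [G HW]. apply Cv_1. simpl. apply WF_top; auto. Qed.

Lemma c_neg : forall w a, Cv w (Neg a) = wneg (Cv w a).
Proof.
  intros w a. destruct (Cv_spec w a) as [[H E]|[[H1 [H2 E]]|[H1 [H2 E]]]];
    rewrite E; destruct w as [G HW]; simpl in *.
  - apply Cv_0. simpl. apply (WF_J0neg G HW). auto.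
  - apply Cv_1. simpl. exact H2.
  - apply Cv_h; simpl. exact H2. rewrite (WF_J0neg G HW). exact H1.
Qed.

Lemma c_J2 : forall w a, Cv w (J2 a) = wJ2 (Cv w a).
Proof.
  intros w a. destruct (Cv_spec w a) as [[H E]|[[H1 [H2 E]]|[H1 [H2 E]]]];
    rewrite E; destruct w as [G HW]; simpl in *.
  - apply Cv_1. simpl. apply (WF_J2J2 G HW). auto.
  - apply Cv_0. simpl. apply (WF_J0J2 G HW). auto.
  - apply Cv_0. simpl. apply (WF_J0J2 G HW). auto.
Qed.

Lemma c_or : forall w a b, Cv w (Or a b) = wor (Cv w a) (Cv w b).
Proof.
  intros w a b.
  destruct (Cv_spec w a) as [[Ha Ea]|[[Ha1 [Ha2 Ea]]|[Ha1 [Ha2 Ea]]]];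
  destruct (Cv_spec w b) as [[Hb Eb]|[[Hb1 [Hb2 Eb]]|[Hb1 [Hb2 Eb]]]];
  rewrite Ea, Eb; destruct w as [G HW]; simpl in *;
  pose proof (WF_or G HW a b) as Ho; pose proof (WF_J0or G HW a b) as Hz;
  pose proof (WF_excl G HW (Or a b)) as Hx;
  first [ apply Cv_1; simpl; tauto
        | apply Cv_0; simpl; tauto
        | apply Cv_h; simpl; tauto ].
Qed.

Lemma boxJ2_iff : forall (w : CW) a,
  proj1_sig w (Box (J2 a)) <-> forall s, CR w s -> proj1_sig s (J2 a).
Proof.
  intros [G HW] a. simpl. split.
  - intros H s Hs. apply Hs. exact H.
  - intros H. apply NNPP. intro Hn.
    destruct (existence G HW a Hn) as [D [HD [HR HnD]]].
    apply HnD. apply (H (exist _ D HD)). intros b Hb. apply HR. exact Hb.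
Qed.

Lemma c_box_h : forall w a, Cv w (Box a) = Wh <-> Cv w a = Wh.
Proof.
  intros [G HW] a. rewrite !Cv_Wh. simpl. rewrite (WF_Pbox G HW). tauto.
Qed.

Lemma c_box_1 : forall w a, Cv w (Box a) = W1 <->
  (Cv w a <> Wh /\ forall s, CR w s -> Cv s a = W1).
Proof.
  intros w a. rewrite Cv_W1, Cv_Wh.
  assert (E : (forall s, CR w s -> Cv s a = W1) <-> (forall s, CR w s -> proj1_sig s (J2 a))).
  { split; intros H s Hs; apply Cv_W1; auto. }
  rewrite E, <- boxJ2_iff. destruct w as [G HW]; simpl. rewrite (WF_J2box G HW).
  split; [intros [HP HB]; tauto | intros [HP HB]; apply NNPP in HP; tauto].
Qed.

Lemma c_box_0 : forall w a, Cv w (Box a) = W0 <->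
  (Cv w a <> Wh /\ exists s, CR w s /\ Cv s a <> W1).
Proof.
  intros w a. rewrite Cv_W0, Cv_Wh.
  assert (E : (exists s, CR w s /\ Cv s a <> W1) <-> ~ (forall s, CR w s -> proj1_sig s (J2 a))).
  { split.
    - intros [s [Hs Hn]] H. apply Hn. apply Cv_W1. auto.
    - intros H. apply NNPP. intro H2. apply H. intros s Hs. apply NNPP. intro H3.
      apply H2. exists s. split; auto. rewrite Cv_W1. auto. }
  rewrite E, <- boxJ2_iff. destruct w as [G HW]; simpl.
  pose proof (WF_J2box G HW a). pose proof (WF_Pbox G HW a).
  pose proof (WF_excl G HW (Box a)). unfold P in *.
  split.
  - intro Hz0. split; [tauto|]. intro HB. apply (WF_excl G HW (Box a)); tauto.
  - intros [HP HnB]. apply NNPP in HP. tauto.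
Qed.

Definition canon : BKmodel := {|
  W := CW; W_nonempty := inhabits x0; R := CR; v := Cv;
  v_bot := c_bot; v_top := c_top; v_neg := c_neg; v_or := c_or; v_J2 := c_J2;
  v_box_h := c_box_h; v_box_1 := c_box_1; v_box_0 := c_box_0 |}.

End Canon.

Lemma completeness : forall G phi, local_conseq G phi -> derivable G phi.
Proof.
  intros G phi H. apply NNPP. intro Hn.
  assert (Hc : consistent (fun z => G z \/ z = Neg (J2 phi))).
  { intro HB. apply DT with (S := G) (e := Neg (J2 phi)) in HB;
      [| intros y Hy; exact Hy | reflexivity].
    apply Hn. apply J2e. by_taut [Imp (Neg (J2 phi)) (J2 Bot); Neg (J2 Bot)]; auto. apply F_bot. }
  destruct (lindenbaum _ Hc) as [D [HD Hsub]].
  set (x0 := exist _ D HD : CW).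
  specialize (H (canon x0) x0).
  assert (Hv : Cv x0 phi = W1).
  { apply H. intros g Hg. simpl. apply Cv_1. simpl. apply (proj1 (W_J2 D HD g)). apply Hsub. left; exact Hg. }
  apply Cv_W1 in Hv. simpl in Hv.
  apply (W_bot D HD). apply (W_der D HD).
  by_taut [J2 phi; Neg (J2 phi)]; apply d_hyp; auto.
Qed.

Theorem mainTheorem5 : forall (G : form -> Prop) (phi : form),
  derivable G phi <-> local_conseq G phi.
Proof.
  intros G phi. split.
  - apply soundness.
  - apply completeness.
Qed.
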